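(* Let $(X,\rho)$ be a metric space, let $c>0$, and for $x,y\in X$ define $$W(x,y):=\log\Big(1+2c\sinh\frac{\rho(x,y)}{2}\Big).$$ If $c\ge 1$, then $W$ is a metric on $X$. Moreover, if $X=\mathbb{B}^2=\{x\in\mathbb{R}^2:|x|<1\}$ is the unit disk and $\rho=j_{\mathbb{B}^2}$, then $W$ is a metric on $\mathbb{B}^2$ if and only if $c\ge 1$.
   Context: For a proper nonempty open subset $D\subset\mathbb{R}^n$, $d_D(x)=\operatorname{dist}(x,\partial D)$, and the distance ratio metric is $j_D(x,y)=\log\Big(1+\frac{|x-y|}{\min\{d_D(x),d_D(y)\}}\Big)$ for $x,y\in D$. For the unit disk, $d_{\mathbb{B}^2}(x)=1-|x|$. *)

(* Defs.v *)
From Stdlib Require Import Reals.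
Open Scope R_scope.

Definition is_metric {X : Type} (d : X -> X -> R) : Prop :=
  (forall x y, 0 <= d x y) /\
  (forall x y, d x y = 0 <-> x = y) /\
  (forall x y, d x y = d y x) /\
  (forall x y z, d x z <= d x y + d y z).

Definition Wfun {X : Type} (c : R) (rho : X -> X -> R) (x y : X) : R :=
  ln (1 + 2 * c * sinh (rho x y / 2)).

Definition norm2 (p : R * R) : R := sqrt (fst p ^ 2 + snd p ^ 2).
Definition dist2 (p q : R * R) : R := norm2 (fst p - fst q, snd p - snd q).

Definition disk : Type := { p : R * R | norm2 p < 1 }.

Definition d_disk (x : disk) : R := 1 - norm2 (proj1_sig x).

Definition j_disk (x y : disk) : R :=
  ln (1 + dist2 (proj1_sig x) (proj1_sig y) / Rmin (d_disk x) (d_disk y)).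

(* Main.v *)
Require Import Defs.
From Stdlib Require Import Reals Lra Psatz ProofIrrelevance.
Open Scope R_scope.

Lemma sinh_ge0 t : 0 <= t -> 0 <= sinh t.
Proof. intro h. destruct (Rle_lt_or_eq_dec _ _ h) as [h'|h'].
  - rewrite <- sinh_0. left. now apply sinh_lt.
  - subst. rewrite sinh_0. lra. Qed.

Lemma sinh_le a b : a <= b -> sinh a <= sinh b.
Proof. intro h. destruct (Rle_lt_or_eq_dec _ _ h) as [h'|h'].
  - left. now apply sinh_lt. - subst; lra. Qed.

Lemma ln_le' x y : 0 < x -> x <= y -> ln x <= ln y.
Proof. intros hx h. destruct (Rle_lt_or_eq_dec _ _ h) as [h'|h'].
  - left. now apply ln_increasing. - subst; lra. Qed.

Lemma exp_ge1 t : 0 <= t -> 1 <= exp t.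
Proof. intro h. rewrite <- exp_0. destruct (Rle_lt_or_eq_dec _ _ h) as [h'|h'].
 - left. now apply exp_increasing. - subst; lra. Qed.

Lemma key c a b : 1 <= c -> 0 <= a -> 0 <= b ->
  1 + 2 * c * sinh ((a + b) / 2) <= (1 + 2 * c * sinh (a/2)) * (1 + 2 * c * sinh (b/2)).
Proof.
  intros hc ha hb. unfold sinh.
  replace ((a+b)/2) with (a/2 + b/2) by field.
  rewrite Ropp_plus_distr, !exp_plus, !exp_Ropp.
  assert (hp : 1 <= exp (a/2)) by (apply exp_ge1; lra).
  assert (hq : 1 <= exp (b/2)) by (apply exp_ge1; lra).
  set (p := exp (a/2)) in *. set (q := exp (b/2)) in *.
  assert (ep : p * / p = 1) by (field; lra).
  assert (eq : q * / q = 1) by (field; lra).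
  assert (ip1 : / p <= 1) by (rewrite <- Rinv_1; apply Rinv_le_contravar; lra).
  assert (iq1 : / q <= 1) by (rewrite <- Rinv_1; apply Rinv_le_contravar; lra).
  assert (ip0 : 0 < / p) by (apply Rinv_0_lt_compat; lra).
  assert (iq0 : 0 < / q) by (apply Rinv_0_lt_compat; lra).

  set (ip := / p) in *. set (iq := / q) in *.
  assert (Sa : 0 <= p - ip) by lra.
  assert (Sb : 0 <= q - iq) by lra.
  assert (h1 : 0 <= (p - ip) * (2 - 2 * iq)) by (apply Rmult_le_pos; lra).
  assert (h2 : 0 <= (q - iq) * (2 - 2 * ip)) by (apply Rmult_le_pos; lra).
  assert (h3 : 0 <= (c - 1) * ((p - ip) * (q - iq))) by (apply Rmult_le_pos; [lra| apply Rmult_le_pos; lra]).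
  assert (h4 : 0 <= c) by lra.
  assert (h5 : 0 <= c * (c - 1) * ((p - ip) * (q - iq))) by (apply Rmult_le_pos; [apply Rmult_le_pos; lra|apply Rmult_le_pos; lra]).
  assert (h6 : 0 <= c * ((p - ip) * (2 - 2 * iq))) by (apply Rmult_le_pos; lra).
  assert (h7 : 0 <= c * ((q - iq) * (2 - 2 * ip))) by (apply Rmult_le_pos; lra).
  nra.
Qed.

Lemma arg_ge1 c t : 0 < c -> 0 <= t -> 1 <= 1 + 2 * c * sinh (t / 2).
Proof. intros hc ht. assert (0 <= sinh (t/2)) by (apply sinh_ge0; lra).
  assert (0 <= c * sinh (t/2)) by (apply Rmult_le_pos; lra). lra. Qed.

Lemma part1 c (hc : 0 < c) : forall (X : Type) (rho : X -> X -> R),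
     is_metric rho -> 1 <= c -> is_metric (Wfun c rho).
Proof.
  intros X rho [h0 [hz [hs ht]]] hc1. unfold Wfun.
  split; [|split; [|split]].
  - intros x y. rewrite <- ln_1. apply ln_le'; [lra|]. apply arg_ge1; auto.
  - intros x y. split.
    + intro E. apply hz.
      assert (E1 : 1 + 2 * c * sinh (rho x y / 2) = 1).
      { apply ln_inv; try lra. pose proof (arg_ge1 c (rho x y) hc (h0 x y)); lra.
        rewrite ln_1; exact E. }
      assert (E2 : sinh (rho x y / 2) = 0).
      { assert (c * sinh (rho x y / 2) = 0) by lra.
        destruct (Rmult_integral _ _ H); [lra|auto]. }
      destruct (h0 x y) as [hp|hp]; [|auto].
      exfalso. assert (sinh 0 < sinh (rho x y / 2)) by (apply sinh_lt; lra).
      rewrite sinh_0 in H. lra.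
    + intro E. apply hz in E. rewrite E. replace (0/2) with 0 by field.
      rewrite sinh_0. replace (1 + 2 * c * 0) with 1 by ring. apply ln_1.
  - intros x y. now rewrite hs.
  - intros x y z.
    pose proof (arg_ge1 c (rho x y) hc (h0 x y)).
    pose proof (arg_ge1 c (rho y z) hc (h0 y z)).
    rewrite <- ln_mult by lra.
    apply ln_le'. pose proof (arg_ge1 c (rho x z) hc (h0 x z)); lra.
    eapply Rle_trans; [| apply key; auto].
    assert (sinh (rho x z / 2) <= sinh ((rho x y + rho y z) / 2)).
    { apply sinh_le. specialize (ht x y z). lra. }
    assert (0 <= c) by lra. nra.
Qed.

Lemma Rdiv_le_0_compat a b : 0 <= a -> 0 < b -> 0 <= a / b.
Proof. intros. unfold Rdiv. apply Rmult_le_pos; auto. left. now apply Rinv_0_lt_compat. Qed.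

Lemma R1 dx m A B E : 0 < dx -> dx <= m -> m <= dx + A -> 0 <= A -> 0 <= B -> E <= A + B ->
  1 + E / dx <= (1 + A / dx) * (1 + B / m).
Proof. intros. 
  assert (Hid : (1 + A / dx) * (1 + B / m) - (1 + E / dx) = (A+B-E)/dx + B*(dx+A-m)/(dx*m)) by (field; lra).
  assert (0 <= (A+B-E)/dx) by (apply Rdiv_le_0_compat; lra).
  assert (0 <= B*(dx+A-m)/(dx*m)).
  { apply Rdiv_le_0_compat. apply Rmult_le_pos; lra. apply Rmult_lt_0_compat; lra. }
  lra. Qed.

Lemma R2 dx dy A B E : 0 < dy -> dy < dx -> 0 <= A -> 0 <= B -> E <= A + B ->
  1 + E / dx <= (1 + A / dy) * (1 + B / dy).
Proof. intros.
  assert (Hid : (1 + A / dy) * (1 + B / dy) - (1 + E / dx) = (A+B-E)/dx + (A+B)*(dx-dy)/(dx*dy) + A*B/(dy*dy)) by (field; lra).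
  assert (0 <= (A+B-E)/dx) by (apply Rdiv_le_0_compat; lra).
  assert (0 <= (A+B)*(dx-dy)/(dx*dy)).
  { apply Rdiv_le_0_compat. apply Rmult_le_pos; lra. apply Rmult_lt_0_compat; lra. }
  assert (0 <= A*B/(dy*dy)).
  { apply Rdiv_le_0_compat. apply Rmult_le_pos; lra. apply Rmult_lt_0_compat; lra. }
  lra. Qed.

Lemma core dx dy dz A B E : 0 < dx -> 0 < dy -> 0 < dz -> 0 <= A -> 0 <= B -> E <= A + B ->
  dy <= dx + A -> dx <= dz ->
  1 + E / Rmin dx dz <= (1 + A / Rmin dx dy) * (1 + B / Rmin dy dz).
Proof. intros.
  rewrite (Rmin_left dx dz) by lra.
  destruct (Rle_lt_dec dx dy).
  - rewrite (Rmin_left dx dy) by lra. apply R1; auto; try lra.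
    + apply Rmin_glb; lra.
    + pose proof (Rmin_l dy dz); lra.
  - rewrite (Rmin_right dx dy) by lra. rewrite (Rmin_left dy dz) by lra.
    apply R2; auto.
Qed.

Lemma norm2_tri a b c d : norm2 (a + b, c + d) <= norm2 (a, c) + norm2 (b, d).
Proof. unfold norm2; cbn [fst snd].
  pose proof (sqrt_cauchy a c b d). unfold Rsqr in H.
  assert (0 <= a^2+c^2) by nra. assert (0 <= b^2+d^2) by nra.
  pose proof (sqrt_pos (a^2+c^2)). pose proof (sqrt_pos (b^2+d^2)).
  pose proof (sqrt_sqrt (a^2+c^2) H0). pose proof (sqrt_sqrt (b^2+d^2) H1).
  replace (a*a+c*c) with (a^2+c^2) in H by ring.
  replace (b*b+d*d) with (b^2+d^2) in H by ring.
  rewrite <- (sqrt_square (sqrt (a ^ 2 + c ^ 2) + sqrt (b ^ 2 + d ^ 2))) by lra.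
  apply sqrt_le_1_alt. nra.
Qed.

Lemma dist2_tri p q r : dist2 p r <= dist2 p q + dist2 q r.
Proof. unfold dist2. destruct p as [p1 p2], q as [q1 q2], r as [r1 r2]; simpl.
  replace (p1 - r1) with ((p1 - q1) + (q1 - r1)) by ring.
  replace (p2 - r2) with ((p2 - q2) + (q2 - r2)) by ring.
  apply norm2_tri. Qed.

Lemma norm_dist p q : norm2 p <= norm2 q + dist2 p q.
Proof. unfold dist2. destruct p as [p1 p2], q as [q1 q2]; simpl.
  replace p1 with (q1 + (p1 - q1)) at 1 by ring.
  replace p2 with (q2 + (p2 - q2)) at 1 by ring.
  apply norm2_tri. Qed.

Lemma dist2_sym p q : dist2 p q = dist2 q p.
Proof. unfold dist2, norm2; simpl. f_equal. ring. Qed.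

Lemma dist2_pos p q : 0 <= dist2 p q.
Proof. apply sqrt_pos. Qed.

Lemma dist2_0 p q : dist2 p q = 0 -> p = q.
Proof. unfold dist2, norm2. destruct p as [p1 p2], q as [q1 q2]; simpl. intro h.
  rewrite !Rmult_1_r in h.
  pose proof (Rle_0_sqr (p1-q1)). pose proof (Rle_0_sqr (p2-q2)). unfold Rsqr in *.
  assert (hh : 0 <= (p1 - q1) * (p1 - q1) + (p2 - q2) * (p2 - q2)) by lra.
  pose proof (sqrt_eq_0 _ hh h) as h'.
  assert (e1 : (p1 - q1) * (p1 - q1) = 0) by lra.
  assert (e2 : (p2 - q2) * (p2 - q2) = 0) by lra.
  apply Rmult_integral in e1. apply Rmult_integral in e2.
  assert (p1 = q1) by (destruct e1; lra). assert (p2 = q2) by (destruct e2; lra). subst; auto. Qed.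

Lemma dist2_refl p : dist2 p p = 0.
Proof. unfold dist2, norm2. replace (fst p - fst p) with 0 by ring.
  replace (snd p - snd p) with 0 by ring. cbn [fst snd]. replace (0^2+0^2) with 0 by ring. apply sqrt_0. Qed.

Lemma d_pos x : 0 < d_disk x.
Proof. unfold d_disk. destruct x; simpl; lra. Qed.

Lemma jarg_pos x y : 1 <= 1 + dist2 (proj1_sig x) (proj1_sig y) / Rmin (d_disk x) (d_disk y).
Proof. assert (0 < Rmin (d_disk x) (d_disk y)) by (apply Rmin_glb_lt; apply d_pos).
  assert (0 <= dist2 (proj1_sig x) (proj1_sig y) / Rmin (d_disk x) (d_disk y))
   by (apply Rdiv_le_0_compat; auto; apply dist2_pos). lra. Qed.

Lemma ln_le2_unused (x y : R) : True.
Proof. exact I. Qed.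
Lemma ln_le_dup x y : 0 < x -> x <= y -> ln x <= ln y.
Proof. intros hx h. destruct (Rle_lt_or_eq_dec _ _ h) as [h'|h'].
  - left. now apply ln_increasing. - subst; lra. Qed.

Lemma j_metric : is_metric j_disk.
Proof.
  unfold j_disk. split; [|split; [|split]].
  - intros x y. rewrite <- ln_1. apply ln_le'; [lra|]. apply jarg_pos.
  - intros x y. split.
    + intro E. pose proof (jarg_pos x y).
      assert (E1 : 1 + dist2 (proj1_sig x) (proj1_sig y) / Rmin (d_disk x) (d_disk y) = 1).
      { apply ln_inv; try lra. rewrite ln_1; exact E. }
      assert (0 < Rmin (d_disk x) (d_disk y)) by (apply Rmin_glb_lt; apply d_pos).
      assert (dist2 (proj1_sig x) (proj1_sig y) = 0).
      { assert (Hz : dist2 (proj1_sig x) (proj1_sig y) / Rmin (d_disk x) (d_disk y) = 0) by lra.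
        unfold Rdiv in Hz. destruct (Rmult_integral _ _ Hz); auto.
        exfalso. pose proof (Rinv_0_lt_compat _ H0). lra. }
      apply dist2_0 in H1. destruct x, y; simpl in H1. subst.
      f_equal. apply proof_irrelevance.
    + intro E. subst. rewrite dist2_refl. unfold Rdiv. rewrite Rmult_0_l, Rplus_0_r. apply ln_1.
  - intros x y. rewrite dist2_sym, Rmin_comm. auto.
  - intros x y z.
    pose proof (jarg_pos x y). pose proof (jarg_pos y z). pose proof (jarg_pos x z).
    rewrite <- ln_mult by lra. apply ln_le'; [lra|].
    pose proof (d_pos x). pose proof (d_pos y). pose proof (d_pos z).
    destruct x as [x hx], y as [y hy], z as [z hz]. unfold d_disk in *; simpl in *.
    pose proof (dist2_pos x y). pose proof (dist2_pos y z).
    pose proof (dist2_tri x y z).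
    destruct (Rle_lt_dec (1 - norm2 x) (1 - norm2 z)).
    + apply core; auto. pose proof (norm_dist x y); lra.
    + rewrite Rmin_comm. rewrite Rmult_comm. rewrite (Rmin_comm (1 - norm2 x)), (Rmin_comm (1 - norm2 y)).
      rewrite (dist2_sym x y), (dist2_sym y z), (dist2_sym x z).
      apply core; auto; try lra.
      * apply dist2_pos.
      * apply dist2_pos.
      * apply dist2_tri.
      * pose proof (norm_dist z y). lra.
Qed.

Lemma norm2_x a : norm2 (a, 0) = Rabs a.
Proof. unfold norm2. cbn [fst snd]. rewrite <- sqrt_Rsqr_abs. f_equal. unfold Rsqr. ring. Qed.

Lemma dist2_x a b : dist2 (a, 0) (b, 0) = Rabs (a - b).
Proof. unfold dist2. cbn [fst snd]. replace (0 - 0) with 0 by ring. apply norm2_x. Qed.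

Lemma sinh_ln t : 0 < t -> sinh (ln t) = (t - / t) / 2.
Proof. intro. unfold sinh. rewrite exp_Ropp, exp_ln; auto. Qed.

Lemma sinh_2ln t : 0 < t -> sinh (ln t + ln t) = (t * t - / (t * t)) / 2.
Proof. intro. unfold sinh. rewrite exp_Ropp, exp_plus, exp_ln; auto. Qed.

Lemma part2 c : 0 < c -> is_metric (Wfun c j_disk) -> 1 <= c.
Proof.
  intros hc [_ [_ [_ htri]]].
  destruct (Rle_lt_dec 1 c) as [h|h]; auto. exfalso.
  set (t := 2 / (1 - c)).
  assert (ht : 2 < t).
  { unfold t. apply (Rmult_lt_reg_r (1 - c)); [lra|]. unfold Rdiv. rewrite Rmult_assoc, Rinv_l by lra.
    nra. }
  assert (ht2 : (1 - c) * t = 2) by (unfold t; field; lra).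
  assert (tt4 : 4 < t * t) by nra.
  assert (e4 : t * t * t * t = (t * t) * (t * t)) by ring.
  assert (tt16 : 16 < (t * t) * (t * t)) by nra.
  assert (i1 : 0 < / (t * t) < 1).
  { split. apply Rinv_0_lt_compat; lra. rewrite <- Rinv_1. apply Rinv_lt_contravar; lra. }
  assert (i2 : 0 < / (t * t * t * t) < / (t * t)).
  { rewrite e4. split. apply Rinv_0_lt_compat. lra.
    apply Rinv_lt_contravar. nra. nra. }
  set (b := 1 - / (t * t)). set (d := 1 - / (t * t * t * t)).
  assert (h0 : norm2 (0, 0) < 1) by (rewrite norm2_x, Rabs_R0; lra).
  assert (hb : norm2 (b, 0) < 1) by (rewrite norm2_x, Rabs_right; unfold b; lra).
  assert (hd : norm2 (d, 0) < 1) by (rewrite norm2_x, Rabs_right; unfold d; lra).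
  set (P0 := exist _ (0, 0) h0 : disk).
  set (Pb := exist _ (b, 0) hb : disk).
  set (Pd := exist _ (d, 0) hd : disk).
  specialize (htri P0 Pb Pd).
  assert (tp : 0 < t) by lra.
  assert (j1 : j_disk P0 Pb = ln t + ln t).
  { unfold j_disk, d_disk; simpl proj1_sig. rewrite !norm2_x, dist2_x, <- ln_mult by lra.
    f_equal. rewrite Rabs_R0, Rabs_left by (unfold b; lra). rewrite Rabs_right by (unfold b; lra).
    rewrite Rmin_right by (unfold b; lra). unfold b. field. nra. }
  assert (j2 : j_disk Pb Pd = ln t + ln t).
  { unfold j_disk, d_disk; simpl proj1_sig. rewrite !norm2_x, dist2_x, <- ln_mult by lra.
    f_equal. rewrite Rabs_left by (unfold b, d; lra).
    rewrite (Rabs_right b) by (unfold b; lra). rewrite (Rabs_right d) by (unfold d; lra).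
    rewrite Rmin_right by (unfold b, d; lra). unfold b, d. field. nra. }
  assert (j3 : j_disk P0 Pd = (ln t + ln t) + (ln t + ln t)).
  { unfold j_disk, d_disk; simpl proj1_sig. rewrite !norm2_x, dist2_x, <- !ln_mult by nra.
    f_equal. rewrite Rabs_R0, Rabs_left by (unfold d; lra). rewrite Rabs_right by (unfold d; lra).
    rewrite Rmin_right by (unfold d; lra). unfold d. field. nra. }
  unfold Wfun in htri. rewrite j1, j2, j3 in htri.
  replace ((ln t + ln t) / 2) with (ln t) in htri by field.
  replace ((ln t + ln t + (ln t + ln t)) / 2) with (ln t + ln t) in htri by field.
  rewrite sinh_ln, sinh_2ln in htri by lra.
  set (A := 1 + 2 * c * ((t - / t) / 2)) in *.
  set (B := 1 + 2 * c * ((t * t - / (t * t)) / 2)) in *.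
  assert (it : / t < 1) by (rewrite <- Rinv_1; apply Rinv_lt_contravar; lra).
  assert (hA : 0 < A). { unfold A. assert (0 < c * (t - / t)) by (apply Rmult_lt_0_compat; lra). lra. }
  assert (hBA : B - A * A = c * (t - / t) * ((1 - c) * t - (1 + c)) * (t - 1) / t)
    by (unfold A, B; field; lra).
  assert (pos : 0 < c * (t - / t) * ((1 - c) * t - (1 + c)) * (t - 1) / t).
  { unfold Rdiv. apply Rmult_lt_0_compat; [|apply Rinv_0_lt_compat; lra].
    apply Rmult_lt_0_compat; [|lra]. apply Rmult_lt_0_compat; [apply Rmult_lt_0_compat; lra|lra]. }
  rewrite <- ln_mult in htri by lra.
  assert (ln (A * A) < ln B) by (apply ln_increasing; nra).
  lra.
Qed.

Theorem theorem1p1 (c : R) (hc : 0 < c) :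
  (forall (X : Type) (rho : X -> X -> R),
     is_metric rho -> 1 <= c -> is_metric (Wfun c rho)) /\
  (is_metric (Wfun c j_disk) <-> 1 <= c).
Proof.
  split.
  - exact (part1 c hc).
  - split.
    + exact (part2 c hc).
    + intro h. exact (part1 c hc _ j_disk j_metric h).
Qed.
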